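(* Let $A_1,\dots,A_n,B$ be finite formulae (type expressions with no occurrence of $\mu$). If for every $\mathbf{LA}$-frame $(\mathcal W,\rhd,R)$, every hereditary valuation $\xi$ and every $p\in\mathcal W$, $\models^\xi_p A_i$ for all $i$ implies $\models^\xi_p B$, then $\{A_1,\dots,A_n\}\vdash B$ is derivable in $\mathbf{LA}$.
   Context: Finite formulae are generated by $A::=X\mid A\to A\mid\bullet A$ over a countably infinite set of propositional (type) variables. The formal system $\mathbf{LA}$ derives judgments $\Gamma\vdash A$ ($\Gamma$ a finite set of finite formulae; $\bullet\Gamma=\{\bullet C\mid C\in\Gamma\}$) by the rules: (assump) $\Gamma\cup\{A\}\vdash A$; (nec) from $\Gamma_1\vdash A$ infer $\bullet\Gamma_1\cup\Gamma_2\vdash\bullet A$; (4) from $\Gamma\vdash\bullet A$ infer $\Gamma\vdash\bullet\bullet A$; ($\to$I) from $\Gamma\cup\{A\}\vdash B$ infer $\Gamma\vdash A\to B$; ($\to$E) from $\Gamma_1\vdash A\to B$ and $\Gamma_2\vdash A$ infer $\Gamma_1\cup\Gamma_2\vdash B$; (W) from $\Gamma\vdash\bullet(\bullet A\to A)$ infer $\Gamma\vdash\bullet A$; (approx) from $\Gamma\vdash A$ infer $\Gamma\vdash\bullet A$; (L) from $\Gamma\vdash\bullet A\to\bullet B$ infer $\Gamma\vdash\bullet(A\to B)$. Kripke semantics: an $\mathbf{LA}$-frame is a triple $(\mathcal W,\rhd,R)$ with $\mathcal W$ nonempty, $\rhd$ a binary relation with no infinite chain $p_0\rhd p_1\rhd\cdots$,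 $R$ reflexive and transitive, such that: $pRq\rhd r$ implies $p\rhd r$; $p\rhd q$ implies $pRq$; and whenever $p\rhd q\,R\,q'$ there is $r$ with $pRr\rhd q'$ such that $r\rhd s$ implies $q'Rs$ for every $s$. A valuation $\xi$ assigns to each variable a map $\mathcal W\to\{\mathbf t,\mathbf f\}$; it is hereditary if $pRq$ and $\xi(X)(p)=\mathbf t$ imply $\xi(X)(q)=\mathbf t$. Forcing for finite formulae: $\models^\xi_p X$ iff $\xi(X)(p)=\mathbf t$; $\models^\xi_p\bullet A$ iff $\models^\xi_q A$ for all $q$ with $p\rhd q$; $\models^\xi_p A\to B$ iff for all $q$ with $pRq$, $\models^\xi_q A$ implies $\models^\xi_q B$. *)

(* Defs.v *)
From Stdlib Require Import List.
Import ListNotations.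

Inductive form : Type :=
| Var : nat -> form
| Imp : form -> form -> form
| Bul : form -> form.

(* Contexts are finite sets, represented by lists; a context Delta "is" the
   union of given pieces when it has exactly the same members. *)
Definition same_set (D : list form) (G : list form) : Prop :=
  forall C, In C D <-> In C G.

Inductive LA : list form -> form -> Prop :=
| LA_assump : forall G A, In A G -> LA G A
| LA_nec : forall G1 G2 D A, LA G1 A ->
    same_set D (map Bul G1 ++ G2) -> LA D (Bul A)
| LA_4 : forall G A, LA G (Bul A) -> LA G (Bul (Bul A))
| LA_impI : forall G D A B, LA D B -> same_set D (A :: G) -> LA G (Imp A B)
| LA_impE : forall G1 G2 D A B, LA G1 (Imp A B) -> LA G2 A ->
    same_set D (G1 ++ G2) -> LA D B
| LA_W : forall G A, LA G (Bul (Imp (Bul A) A)) -> LA G (Bul A)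
| LA_approx : forall G A, LA G A -> LA G (Bul A)
| LA_L : forall G A B, LA G (Imp (Bul A) (Bul B)) -> LA G (Bul (Imp A B)).

Record LAframe (W : Type) (rhd R : W -> W -> Prop) : Prop := {
  fr_nonempty : exists w : W, True;
  fr_noinf : ~ (exists f : nat -> W, forall n, rhd (f n) (f (S n)));
  fr_refl : forall p, R p p;
  fr_trans : forall p q r, R p q -> R q r -> R p r;
  fr_Rrhd : forall p q r, R p q -> rhd q r -> rhd p r;
  fr_rhdR : forall p q, rhd p q -> R p q;
  fr_cond : forall p q q', rhd p q -> R q q' ->
      exists r, R p r /\ rhd r q' /\ (forall s, rhd r s -> R q' s)
}.

Definition hereditary (W : Type) (R : W -> W -> Prop) (xi : nat -> W -> bool) : Prop :=
  forall X p q, R p q -> xi X p = true -> xi X q = true.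

Fixpoint forces (W : Type) (rhd R : W -> W -> Prop) (xi : nat -> W -> bool)
  (p : W) (A : form) : Prop :=
  match A with
  | Var X => xi X p = true
  | Bul A' => forall q, rhd p q -> forces W rhd R xi q A'
  | Imp A1 A2 => forall q, R p q -> forces W rhd R xi q A1 -> forces W rhd R xi q A2
  end.

(* Main.v *)
Require Import Defs.
From Stdlib Require Import List.
From Stdlib Require Import Classical ClassicalDescription Lia PeanoNat.
Import ListNotations.

Lemma same_set_refl D : same_set D D.
Proof. intro; tauto. Qed.

Lemma LA_weaken : forall G A, LA G A -> forall G', incl G G' -> LA G' A.
Proof.
  induction 1; intros G' Hi.
  - apply LA_assump; auto.
  - apply LA_nec with (G1:=G1) (G2:=G'); [exact H|]. intro C; split; intro HC.
    + apply in_or_app; right; auto.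
    + apply in_app_or in HC as [HC|HC]; auto. apply Hi. apply H0. apply in_or_app; left; auto.
  - apply LA_4; auto.
  - apply LA_impI with (D := A :: G'). apply IHLA. intros x Hx. apply H0 in Hx.
    destruct Hx as [->|Hx]; [left; auto|right; auto]. apply same_set_refl.
  - apply LA_impE with (G1:=G') (G2:=G') (A:=A).
    + apply IHLA1. intros x Hx; apply Hi, H1, in_or_app; left; auto.
    + apply IHLA2. intros x Hx; apply Hi, H1, in_or_app; right; auto.
    + intro C; split; intro HC. apply in_or_app; left; auto. apply in_app_or in HC as [HC|HC]; auto.
  - apply LA_W; auto.
  - apply LA_approx; auto.
  - apply LA_L; auto.
Qed.

Lemma LA_impE' G A B : LA G (Imp A B) -> LA G A -> LA G B.
Proof.
  intros H1 H2. apply LA_impE with (G1:=G) (G2:=G) (A:=A); auto.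
  intro C; split; intro HC. apply in_or_app; left; auto. apply in_app_or in HC as [HC|HC]; auto.
Qed.

Definition Der (P : form -> Prop) (C : form) := exists L, (forall x, In x L -> P x) /\ LA L C.

Lemma Der_assump (P : form -> Prop) x : P x -> Der P x.
Proof. intro h. exists [x]; split; [intros y [->|[]]; auto | apply LA_assump; left; auto]. Qed.

Lemma Der_mono (P Q : form -> Prop) C : (forall x, P x -> Q x) -> Der P C -> Der Q C.
Proof. intros h [L [HL HC]]. exists L; split; auto. Qed.

Lemma Der_impE P A B : Der P (Imp A B) -> Der P A -> Der P B.
Proof.
  intros [L1 [H1 D1]] [L2 [H2 D2]]. exists (L1 ++ L2); split.
  - intros x Hx; apply in_app_or in Hx as [Hx|Hx]; auto.
  - apply LA_impE with (G1:=L1) (G2:=L2) (A:=A); auto. apply same_set_refl.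
Qed.

Lemma Der_approx P A : Der P A -> Der P (Bul A).
Proof. intros [L [H D]]. exists L; split; auto. apply LA_approx; auto. Qed.

Lemma Der_W P A : Der P (Bul (Imp (Bul A) A)) -> Der P (Bul A).
Proof. intros [L [H D]]. exists L; split; auto. apply LA_W; auto. Qed.

Lemma cut_list : forall L C, LA L C -> forall Q, (forall x, In x L -> Der Q x) -> Der Q C.
Proof.
  induction L; intros C H Q HQ.
  - exists []; split; [intros x []|auto].
  - assert (LA L (Imp a C)) by (apply LA_impI with (D:=a::L); [auto|apply same_set_refl]).
    apply Der_impE with a. apply IHL; auto. intros; apply HQ; right; auto. apply HQ; left; auto.
Qed.

Lemma Der_cut (P Q : form -> Prop) C : (forall x, P x -> Der Q x) -> Der P C -> Der Q C.
Proof. intros h [L [HL HC]]. apply cut_list with L; auto. Qed.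

Lemma split_list : forall (P : form -> Prop) A L, (forall x, In x L -> P x \/ x = A) ->
  exists L', (forall x, In x L' -> P x) /\ incl L (A :: L').
Proof.
  intros P A; induction L; intros H.
  - exists []; split; [intros x []| intros x []].
  - destruct IHL as [L' [H1 H2]]. intros; apply H; right; auto.
    destruct (H a (or_introl eq_refl)) as [Ha| ->].
    + exists (a::L'); split. intros x [->|Hx]; auto.
      intros x [->|Hx]. right; left; auto. apply H2 in Hx. destruct Hx as [->|Hx]; [left; auto| right; right; auto].
    + exists L'; split; auto. intros x [->|Hx]; [left; auto| auto].
Qed.

Lemma Der_deduct (P : form -> Prop) A B : Der (fun y => P y \/ y = A) B -> Der P (Imp A B).
Proof.
  intros [L [HL HB]]. destruct (split_list P A L HL) as [L' [H1 H2]]. exists L'; split; auto.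
  apply LA_impI with (D := A :: L'). eapply LA_weaken; eauto. apply same_set_refl.
Qed.

Lemma Der_nec (P Q : form -> Prop) D : Der P D -> (forall x, P x -> Der Q (Bul x)) -> Der Q (Bul D).
Proof.
  intros [L [HL HD]] h. apply Der_cut with (P := fun y => In y (map Bul L)).
  - intros x Hx. apply in_map_iff in Hx as [y [<- Hy]]. auto.
  - exists (map Bul L); split; auto. apply LA_nec with (G1:=L) (G2:=[]); auto.
    rewrite app_nil_r; apply same_set_refl.
Qed.

Definition form_eq_dec : forall x y : form, {x = y} + {x <> y}.
Proof. decide equality; apply Nat.eq_dec. Defined.

Definition Gbox (G : form -> Prop) (A : form) : form -> Prop :=
  fun x => Der G (Bul x) \/ x = Bul A.

Fixpoint Inv (BA : list form) (n : nat) (G : form -> Prop) : Prop :=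
  match n with
  | 0 => forall A, In A BA -> Der G (Bul A)
  | S n' => forall A, In A BA -> ~ Der G (Bul A) -> Inv BA n' (Gbox G A)
  end.

Lemma Inv_mono BA : forall n G G', (forall C, Der G C -> Der G' C) -> Inv BA n G -> Inv BA n G'.
Proof.
  induction n; simpl; intros G G' Hs HI A HA.
  - apply Hs; auto.
  - intro Hn. apply IHn with (Gbox G A).
    + intros C. apply Der_cut. intros x [Hx| ->].
      apply Der_assump; left; apply Hs; auto. apply Der_assump; right; auto.
    + apply HI; auto.
Qed.

Lemma Inv_exists BA : forall n L G, length L <= n ->
  (forall A, In A BA -> Der G (Bul A) \/ In A L) -> Inv BA n G.
Proof.
  induction n; intros L G Hl H; simpl.
  - intros A HA. destruct (H A HA) as [h|h]; auto. destruct L; simpl in Hl; [destruct h| lia].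
  - intros A HA Hn. apply IHn with (remove form_eq_dec A L).
    + destruct (H A HA) as [h|h]; [contradiction|].
      pose proof (remove_length_lt form_eq_dec L A h). lia.
    + intros A' HA'. destruct (H A' HA') as [h|h].
      * left. apply Der_assump; left. apply Der_approx; auto.
      * destruct (form_eq_dec A' A) as [->|ne].
        left; apply Der_assump; right; auto.
        right. apply in_in_remove; auto.
Qed.

Definition W (BA : list form) := {p : (form -> Prop) * nat | Inv BA (snd p) (fst p)}.
Definition th {BA} (w : W BA) := fst (proj1_sig w).
Definition ht {BA} (w : W BA) := snd (proj1_sig w).

Definition Rm BA (w w' : W BA) : Prop :=
  (forall C, Der (th w) C -> Der (th w') C) /\ ht w' <= ht w.
Definition Rh BA (w w' : W BA) : Prop :=
  (forall C, Der (th w) (Bul C) -> Der (th w') C) /\ ht w' < ht w.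
Definition xi BA (X : nat) (w : W BA) : bool :=
  if excluded_middle_informative (Der (th w) (Var X)) then true else false.

Fixpoint imps (l : list form) (F : form) : form :=
  match l with [] => F | a :: l' => Imp a (imps l' F) end.

Lemma deduct_list : forall Ds G F, LA (G ++ Ds) F -> LA G (imps Ds F).
Proof.
  induction Ds; intros G F H; simpl.
  - rewrite app_nil_r in H; auto.
  - apply LA_impI with (D := a :: G); [|apply same_set_refl]. apply IHDs.
    eapply LA_weaken; eauto. intros x Hx. apply in_app_or in Hx as [Hx|[->|Hx]].
    right; apply in_or_app; auto. left; auto. right; apply in_or_app; auto.
Qed.

Lemma L_list : forall Ds G C, LA G (imps (map Bul Ds) (Bul C)) -> LA G (Bul (imps Ds C)).
Proof.
  induction Ds; intros G C H; simpl in *; auto.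
  apply LA_L. apply LA_impI with (D := Bul a :: G); [|apply same_set_refl].
  apply IHDs. apply LA_impE' with (Bul a).
  - eapply LA_weaken; eauto. intros x Hx; right; auto.
  - apply LA_assump; left; auto.
Qed.

Lemma imps_apply H : forall Ds F, Der H (imps Ds F) -> (forall D, In D Ds -> Der H D) -> Der H F.
Proof.
  induction Ds; intros F h1 h2; simpl in *; auto.
  apply IHDs; auto. apply Der_impE with a; auto.
Qed.

Lemma partition (G : form -> Prop) (H : form -> Prop) : forall L,
  (forall x, In x L -> G x \/ exists D, x = Bul D /\ Der H D) ->
  exists L1 Ds, (forall x, In x L1 -> G x) /\ (forall D, In D Ds -> Der H D) /\
     incl L (L1 ++ map Bul Ds).
Proof.
  induction L; intros h.
  - exists [], []; repeat split; try (intros x []). 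
  - destruct IHL as [L1 [Ds [h1 [h2 h3]]]]. intros; apply h; right; auto.
    destruct (h a (or_introl eq_refl)) as [Ga | [D [-> HD]]].
    + exists (a :: L1), Ds; repeat split; auto. intros x [Hx|Hx]; [subst x|]; auto.
      intros x [Hx|Hx]; [subst x|]. left; auto. right; apply h3; auto.
    + exists L1, (D :: Ds); repeat split; auto. intros x [Hx|Hx]; [subst x|]; auto.
      intros x [Hx|Hx]; [subst x|]. apply in_or_app; right; left; auto.
      apply h3 in Hx. apply in_app_or in Hx as [Hx|Hx]; apply in_or_app; [left|right; right]; auto.
Qed.

Lemma key (G H : form -> Prop) C : (forall E, Der G (Bul E) -> Der H E) ->
  Der (fun x => G x \/ exists D, x = Bul D /\ Der H D) (Bul C) -> Der H C.
Proof.
  intros Ht [L [HL HC]]. destruct (partition G H L HL) as [L1 [Ds [h1 [h2 h3]]]].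
  apply imps_apply with Ds; auto. apply Ht. exists L1; split; auto.
  apply L_list. apply deduct_list. eapply LA_weaken; eauto.
Qed.

Lemma frame BA : LAframe (W BA) (Rh BA) (Rm BA).
Proof.
  constructor.
  - assert (h : Inv BA 0 (fun _ => True)) by (intros A _; apply Der_assump; auto).
    exists (exist _ ((fun _ => True), 0) h : W BA); auto.
  - intros [f Hf]. assert (forall k, ht (f k) + k <= ht (f 0)).
    { induction k; [lia|]. destruct (Hf k) as [_ h]. lia. }
    specialize (H (S (ht (f 0)))). lia.
  - intro p; split; auto.
  - intros p q r [h1 h2] [h3 h4]; split; auto. lia.
  - intros p q r [h1 h2] [h3 h4]; split; auto. lia.
  - intros p q [h1 h2]; split; [|lia]. intros C HC. apply h1. apply Der_approx; auto.
  - intros p q q' [Hpq1 Hpq2] [Hqq1 Hqq2].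
    set (K := fun x => th p x \/ exists D, x = Bul D /\ Der (th q') D).
    assert (HK : Inv BA (S (ht q')) K).
    { simpl; intros A HA Hn. apply Inv_mono with (th q'); [|exact (proj2_sig q')].
      intros C; apply Der_cut; intros x Hx; apply Der_assump; left; apply Der_assump; right;
        exists x; split; auto; apply Der_assump; auto. }
    exists (exist _ (K, S (ht q')) HK : W BA). split; [|split].
    + split. intros C; apply Der_mono. intros x hx; left; auto. unfold ht at 1; simpl. lia.
    + split. intros C HC. apply key with (th p); [|exact HC].
      intros E HE; apply Hqq1, Hpq1; auto. unfold ht at 2; simpl; lia.
    + intros s [Hs1 Hs2]; split.
      * intros C HC; apply Hs1; apply Der_assump; right; exists C; auto.
      * unfold ht at 2 in Hs2; simpl in Hs2; lia.
Qed.

Fixpoint bb (C : form) : list form :=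
  match C with Var _ => [] | Imp a b => bb a ++ bb b | Bul a => a :: bb a end.

Lemma truth BA : forall C, incl (bb C) BA -> forall w : W BA,
  forces (W BA) (Rh BA) (Rm BA) (xi BA) w C <-> Der (th w) C.
Proof.
  induction C; intros Hinc w; simpl.
  - unfold xi; destruct excluded_middle_informative; split; intro; auto; try discriminate; contradiction.
  - assert (i1 : incl (bb C1) BA) by (intros x hx; apply Hinc, in_or_app; auto).
    assert (i2 : incl (bb C2) BA) by (intros x hx; apply Hinc, in_or_app; auto).
    split.
    + intro Hf.
      set (w' := exist _ ((fun y => th w y \/ y = C1), ht w)
        (Inv_mono BA (ht w) (th w) _ (fun C => Der_mono _ _ C (fun x hx => or_introl hx)) (proj2_sig w)) : W BA).
      assert (HR : Rm BA w w') by (split; [intros C; apply Der_mono; intros x hx; left; auto | unfold ht at 1; simpl; lia]).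
      assert (h1 : forces (W BA) (Rh BA) (Rm BA) (xi BA) w' C1).
      { apply (proj2 (IHC1 i1 w')). apply Der_assump. right; auto. }
      apply Der_deduct. apply (IHC2 i2 w'). exact (Hf w' HR h1).
    + intros HD q [Hq1 _] HqA. apply IHC2; auto. apply Der_impE with C1; [apply Hq1; auto| apply IHC1; auto].
  - assert (i1 : incl (bb C) BA) by (intros x hx; apply Hinc; right; auto).
    split.
    + intro Hf. apply NNPP; intro Hn. destruct w as [[G n] HI]. unfold th in *; simpl in *.
      destruct n as [|n'].
      * apply Hn, HI, Hinc; left; auto.
      * simpl in HI. pose (HI' := HI C (Hinc C (or_introl eq_refl)) Hn).
        set (w' := exist _ (Gbox G C, n') HI' : W BA).
        assert (Hr : Rh BA (exist _ (G, S n') HI) w').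
        { split. intros D HD; apply Der_assump; left; auto. unfold ht; simpl; lia. }
        specialize (Hf w' Hr). apply (IHC i1 w') in Hf.
        apply Hn. apply Der_W. apply Der_nec with (P := fun x => Der G (Bul x)); auto.
        apply Der_deduct. exact Hf.
    + intros HD q [Hq1 _]. apply IHC; auto.
Qed.

Theorem theorem10 (As : list form) (B : form) :
  (forall (W : Type) (rhd R : W -> W -> Prop), LAframe W rhd R ->
     forall xi : nat -> W -> bool, hereditary W R xi ->
     forall p : W, (forall A, In A As -> forces W rhd R xi p A) ->
       forces W rhd R xi p B) ->
  LA As B.
Proof.
  intros Hsem. set (BA := bb B ++ flat_map bb As).
  assert (HI : Inv BA (length BA) (fun x => In x As)).
  { apply Inv_exists with BA; auto. }
  set (w0 := exist _ ((fun x => In x As), length BA) HI : W BA).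
  assert (Hf : forces (W BA) (Rh BA) (Rm BA) (xi BA) w0 B).
  { apply Hsem. apply frame.
    - intros X p q [h _]. unfold xi. repeat destruct excluded_middle_informative; auto; try discriminate.
    - intros A HA. apply truth.
      + intros x hx. apply in_or_app; right. apply in_flat_map. eauto.
      + apply Der_assump. exact HA. }
  apply truth in Hf; [| intros x hx; apply in_or_app; left; auto].
  destruct Hf as [L [HL HB]]. eapply LA_weaken; eauto.
Qed.
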